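(* Let $D$ be a connected ribbon with an odd number of boxes such that $D\notin\mathfrak B$. If the length of $D$ is even, then $\mathfrak r_D$ is not $p$-positive.
   Context: A connected ribbon $D$ of composition $(\alpha_1,\dots,\alpha_\ell)$ has $\alpha_r$ consecutive boxes in row $r$ (rows numbered top to bottom), with the leftmost box of row $r$ directly above the rightmost box of row $r+1$; $\ell$ is its length. $D^t$ is the transpose and $D^\circ$ the rotation by 180 degrees. $\mathfrak r_D=\sum_T x^{c(T)}$ over fillings $T$ of $D$ with letters of $\{1'<1<2'<2<\cdots\}$ having rows and columns weakly increasing, at most one unmarked $k$ per column and at most one marked $k'$ per row; $c(T)_i$ counts entries $i$ or $i'$. $\triangle_{n,k}$ is the ribbon of composition $(1^{k-1},n-k+1)$. $\mathfrak B=\bigcup_n\mathfrak B_n$ with $\mathfrak B_n=\{\triangle_{n,1},\triangle_{n,1}^t,\triangle_{n,3},\triangle_{n,3}^t,\triangle_{n,3}^\circ,(\triangle_{n,3}^t)^\circ\}$ (only the first two when $n\le 2$). A symmetric function is $p$-positive if all its coefficients in the power sum basis are nonnegative. *)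

(* Defs.v *)
From HB Require Import structures.
From mathcomp Require Import all_boot all_order all_algebra.
Set Implicit Arguments. Unset Strict Implicit. Unset Printing Implicit Defensive.
Import Order.TTheory GRing.Theory Num.Theory.

(* A connected ribbon is given by its composition
   alpha = [:: alpha_1; ...; alpha_l]  (all parts positive).
   Cells are pairs (row, column), rows numbered 0,1,... from top to bottom,
   columns increasing to the right (English convention).
   Row r starts at column  start alpha r = sum_{s > r} (alpha_s - 1),
   so that the leftmost box of row r is directly above the rightmost box
   of row r+1, and the bottom row starts at column 0. *)

Definition composition (alpha : seq nat) : bool := all (fun a => 0 < a) alpha.

Definition row_start (alpha : seq nat) (r : nat) : nat :=
  sumn [seq a.-1 | a <- drop r.+1 alpha].

Definition cells (alpha : seq nat) : seq (nat * nat) :=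
  flatten [seq [seq (r, row_start alpha r + j) | j <- iota 0 (nth 0 alpha r)]
          | r <- iota 0 (size alpha)].

Definition transp (X : seq (nat * nat)) : seq (nat * nat) :=
  [seq (p.2, p.1) | p <- X].

(* rotation by 180 degrees (all coordinates are < size X for ribbons) *)
Definition rot180 (X : seq (nat * nat)) : seq (nat * nat) :=
  [seq (size X - p.1, size X - p.2) | p <- X].

Definition shift (a b : nat) (X : seq (nat * nat)) : seq (nat * nat) :=
  [seq (p.1 + a, p.2 + b) | p <- X].

Definition same_shape (X Y : seq (nat * nat)) : Prop :=
  exists a b a' b', forall p, (p \in shift a b X) = (p \in shift a' b' Y).

Definition tri (n k : nat) : seq nat := nseq k.-1 1 ++ [:: n - k + 1].

Definition in_Bn (m : nat) (X : seq (nat * nat)) : Prop :=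
  [\/ same_shape X (cells (tri m 1)),
      same_shape X (transp (cells (tri m 1))) |
      2 < m /\
      [\/ same_shape X (cells (tri m 3)),
          same_shape X (transp (cells (tri m 3))),
          same_shape X (rot180 (cells (tri m 3))) |
          same_shape X (rot180 (transp (cells (tri m 3))))]].

Definition in_B (alpha : seq nat) : Prop :=
  exists m, 0 < m /\ in_Bn m (cells alpha).

(* Fillings with letters 1' < 1 < 2' < 2 < ... < N' < N, encoded by codes
   0 < 1 < 2 < ... < 2N-1: code l stands for the letter with value l./2 + 1,
   marked iff l is even. *)

Definition marked (l : nat) : bool := ~~ odd l.

Section Fillings.
Variables (alpha : seq nat) (N : nat).

Definition cell (i : nat) : nat * nat := nth (0, 0) (cells alpha) i.

Definition filling := {ffun 'I_(size (cells alpha)) -> 'I_(2 * N)}.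

Definition valid_filling (T : filling) : bool :=
  [forall i : 'I_(size (cells alpha)), forall j : 'I_(size (cells alpha)),
     [&& ((cell i).1 == (cell j).1) && ((cell i).2 <= (cell j).2) ==> (T i <= T j),
         ((cell i).2 == (cell j).2) && ((cell i).1 <= (cell j).1) ==> (T i <= T j),
         [&& i != j, (cell i).2 == (cell j).2, T i == T j :> nat & ~~ marked (T i)]
           ==> false &
         [&& i != j, (cell i).1 == (cell j).1, T i == T j :> nat & marked (T i)]
           ==> false]].

(* c(T)_k (0-indexed variable k) = number of entries k+1 or (k+1)' *)
Definition content (T : filling) (k : 'I_N) : nat :=
  #|[set i | (T i : nat)./2 == k]|.

(* coefficient of x^c in r_D(x_1,...,x_N) *)
Definition rD_coeff (c : 'I_N -> nat) : nat :=
  #|[set T : filling | valid_filling T && [forall k, content T k == c k]]|.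

End Fillings.

(* Power sums.  Coefficient of x^c in p_lambda(x_1,...,x_N):
   p_lambda = prod_i (sum_j x_j^{lambda_i}) = sum over f : parts -> variables. *)
Definition p_coeff (lam : seq nat) (N : nat) (c : 'I_N -> nat) : nat :=
  #|[set f : {ffun 'I_(size lam) -> 'I_N} |
      [forall j : 'I_N, \sum_(i | f i == j) nth 0 lam i == c j]]|.

(* Partitions of n, encoded as nonincreasing n-tuples with entries <= n
   summing to n (padded with zeros). *)
Definition is_part (n : nat) (t : n.-tuple 'I_n.+1) : bool :=
  sorted geq (map val t) && (sumn (map val t) == n).

Definition part_of (n : nat) (t : n.-tuple 'I_n.+1) : seq nat :=
  [seq x <- map val t | x != 0].

(* A homogeneous symmetric function F of degree n, given by its monomial
   coefficients in every finite number N of variables (F N c = coefficient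
   of x^c in F(x_1,...,x_N)), is p-positive iff it is a nonnegative
   (rational) combination of the power sums p_lambda, lambda |- n. *)
Definition p_positive (n : nat) (F : forall N : nat, ('I_N -> nat) -> nat) : Prop :=
  exists coef : n.-tuple 'I_n.+1 -> rat,
    (forall t, is_part t -> 0 <= coef t)%R /\
    forall (N : nat) (c : 'I_N -> nat),
      ((F N c)%:R = \sum_(t | is_part t) coef t * (p_coeff (part_of t) c)%:R)%R.

(* Main.v *)
Require Import Defs.
From mathcomp Require Import all_boot all_order all_algebra.
From mathcomp Require Import ring lra zify.
Set Implicit Arguments. Unset Strict Implicit. Unset Printing Implicit Defensive.
Import Order.TTheory GRing.Theory Num.Theory.

Definition rowc (S a : nat) : seq (nat * nat) := [seq (0, S + j) | j <- iota 0 a].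
Definition shiftr (X : seq (nat * nat)) : seq (nat * nat) := [seq (p.1.+1, p.2) | p <- X].
Definition Sof (b : seq nat) : nat := sumn [seq x.-1 | x <- b].

Lemma cells_cons a b : cells (a :: b) = rowc (Sof b) a ++ shiftr (cells b).
Proof.
rewrite /cells /=; congr (_ ++ _); first by rewrite /rowc /row_start /= drop0.
have -> : iota 1 (size b) = map S (iota 0 (size b)).
  by rewrite (iotaDl 1 0).
elim: (iota 0 (size b)) => [|r rs IH] //=.
by rewrite IH /shiftr map_cat -map_comp.
Qed.

Lemma size_cells a : size (cells a) = sumn a.
Proof.
elim: a => [|x a IH] //; rewrite cells_cons size_cat !size_map size_iota IH //.
Qed.

Lemma cells_col b p : p \in cells b -> p.2 <= Sof b.
Proof.
elim: b p => [|x b IH] p //; rewrite cells_cons mem_cat => /orP [].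
  move=> /mapP [j]; rewrite mem_iota add0n => /andP [_ hj] ->; rewrite /= /Sof /= addnC leq_add2r.
  by rewrite -ltnS (leq_trans hj) //; case: x {hj}.
move=> /mapP [q /IH hq ->] /=; rewrite /Sof /=; exact: leq_trans hq (leq_addl _ _).
Qed.

Lemma cells_top b g : 0 < b -> nth (0,0) (cells (b :: g)) b.-1 = (0, Sof (b :: g)).
Proof.
move=> hb; rewrite cells_cons nth_cat size_map size_iota prednK // leqnn.
rewrite (nth_map 0) ?size_iota ?prednK // nth_iota ?prednK // add0n /Sof /= addnC.
by [].
Qed.

Lemma uniq_cells a : uniq (cells a).
Proof.
elim: a => [|x a IH] //; rewrite cells_cons cat_uniq; apply/and3P; split.
- by rewrite map_inj_uniq ?iota_uniq // => i j [] /eqP; rewrite eqn_add2l => /eqP.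
- by apply/hasPn => p /mapP [q _ ->]; apply/mapP => [[j _]] [].
- by rewrite /shiftr map_inj_uniq // => [[p1 p2] [q1 q2]] [-> ->].
Qed.

Definition Rr (x y : nat) : bool := (x < y) || ((x == y) && odd x).
Definition Cc (x y : nat) : bool := (x < y) || ((x == y) && ~~ odd x).

Definition condV (p q : nat * nat) (x y : nat) (neq : bool) : bool :=
  [&& (p.1 == q.1) && (p.2 <= q.2) ==> (x <= y),
      (p.2 == q.2) && (p.1 <= q.1) ==> (x <= y),
      [&& neq, p.2 == q.2, x == y & ~~ marked x] ==> false &
      [&& neq, p.1 == q.1, x == y & marked x] ==> false].

Definition condP (z1 z2 : (nat * nat) * nat) : bool :=
  condV z1.1 z2.1 z1.2 z2.2 (z1.1 != z2.1).

Definition validM (Z : seq ((nat * nat) * nat)) : bool :=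
  all (fun z1 => all (condP z1) Z) Z.

Lemma RrE x y : Rr x y = (x <= y) && ~~ ((x == y) && ~~ odd x).
Proof. by rewrite /Rr; case: ltngtP => //= ->; case: (odd y). Qed.

Lemma CcE x y : Cc x y = (x <= y) && ~~ ((x == y) && odd x).
Proof. by rewrite /Cc; case: ltngtP => //= ->; case: (odd y). Qed.

Lemma Rr_trans x y z : Rr x y -> Rr y z -> Rr x z.
Proof.
rewrite /Rr => /orP [h|/andP [/eqP -> h]] /orP [h'|/andP [/eqP <- h']].
- by rewrite (ltn_trans h h').
- by rewrite h.
- by rewrite h'.
- by rewrite eqxx h orbT.
Qed.

Lemma Cc_trans x y z : Cc x y -> Cc y z -> Cc x z.
Proof.
rewrite /Cc => /orP [h|/andP [/eqP -> h]] /orP [h'|/andP [/eqP <- h']].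
- by rewrite (ltn_trans h h').
- by rewrite h.
- by rewrite h'.
- by rewrite eqxx h orbT.
Qed.

Lemma all_andb (T : Type) (a b : pred T) s :
  all (fun x => a x && b x) s = all a s && all b s.
Proof. by elim: s => //= x s ->; case: (a x); case: (b x); case: (all a s). Qed.

Lemma condP_refl z : condP z z.
Proof. by rewrite /condP /condV eqxx /= !leqnn !eqxx. Qed.

Lemma validM_eq Z1 Z2 : Z1 =i Z2 -> validM Z1 = validM Z2.
Proof.
move=> e; rewrite /validM (eq_all_r e); apply: eq_all => z; exact: eq_all_r.
Qed.

Lemma validM_cons z Z :
  validM (z :: Z) = [&& all (condP z) Z, all (fun z' => condP z' z) Z & validM Z].
Proof.
rewrite /validM /= condP_refl /= all_andb.
by case: (all (condP z) Z); case: (all (fun z' => condP z' z) Z).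
Qed.

Definition shz (z : (nat * nat) * nat) := ((z.1.1.+1, z.1.2), z.2).

Lemma zip_shiftr X t : zip (shiftr X) t = map shz (zip X t).
Proof. by elim: X t => [|p X IH] [|y t] //=; rewrite IH. Qed.

Lemma condP_sh z1 z2 : condP (shz z1) (shz z2) = condP z1 z2.
Proof.
case: z1 z2 => [[p1 p2] x] [[q1 q2] y].
by rewrite /condP /condV /shz /= !eqSS !ltnS !xpair_eqE eqSS.
Qed.

Lemma validM_sh X t : validM (zip (shiftr X) t) = validM (zip X t).
Proof.
rewrite zip_shiftr /validM all_map; apply: eq_all => z1 /=.
by rewrite all_map; apply: eq_all => z2 /=; rewrite condP_sh.
Qed.

Lemma colrel Z a b c u y : validM Z -> ((a,c),u) \in Z -> ((b,c),y) \in Z ->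
  a <= b -> (u == y) || Cc u y.
Proof.
move=> /allP hv h1 h2 hab.
have := allP (hv _ h1) _ h2; have := allP (hv _ h2) _ h1.
rewrite /condP /condV /= !eqxx hab /=.
case: (eqVneq a b) => [<-|nab].
- rewrite leqnn /= => /andP [h3 _] /andP [h4 _].
  by rewrite eqn_leq h3 h4.
- rewrite !xpair_eqE (negbTE nab) /= => _ /and3P [h3 h4 _].
  by rewrite /marked negbK implybF in h4; rewrite CcE h3 h4 orbT.
Qed.

Lemma rowrel Z r a b u y : validM Z -> ((r,a),u) \in Z -> ((r,b),y) \in Z ->
  a <= b -> (u == y) || Rr u y.
Proof.
move=> /allP hv h1 h2 hab.
have := allP (hv _ h1) _ h2; have := allP (hv _ h2) _ h1.
rewrite /condP /condV /= !eqxx hab /=.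
case: (eqVneq a b) => [<-|nab].
- rewrite leqnn /= => /andP [h3 _] /andP [h4 _].
  by rewrite eqn_leq h3 h4.
- rewrite !xpair_eqE (negbTE nab) eqxx andbF /= => _ /andP [h3 h4].
  by rewrite /marked implybF in h4; rewrite RrE h3 h4 orbT.
Qed.

Lemma crossU S x u Z : (forall z, z \in Z -> (0 < z.1.1) && (z.1.2 <= S)) ->
  ((1,S),u) \in Z -> validM Z -> validM (((0,S),x) :: Z) = Cc x u.
Proof.
move=> hZ hz0 hv; rewrite validM_cons hv andbT; apply/idP/idP.
- case/andP => /allP h1 _; have := h1 _ hz0.
  by rewrite /condP /condV /= eqxx /= /marked negbK implybF andbT CcE.
- move=> hc; apply/andP; split; apply/allP => [[[i k] y]] hz /=;
    have /andP [hi hk] := hZ _ hz; rewrite /condP /condV /=;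
    have i0 : (0 == i) = false by case: (i) hi.
  + rewrite xpair_eqE i0 /=.
    case: (eqVneq k S) => [ek|nk] //=.
    subst k; have := colrel hv hz0 hz hi.
    have Cxy : (u == y) || Cc u y -> Cc x y.
      by case/orP => [/eqP <- //|h]; exact: Cc_trans hc h.
    move/Cxy; rewrite CcE => /andP [h1 h2].
    by rewrite /marked negbK implybF ?h1 ?h2.
  + rewrite xpair_eqE eq_sym i0 /=.
    case: (eqVneq k S) => [ek|nk] //=.
    subst k; have := colrel hv hz0 hz hi.
    have Cxy : (u == y) || Cc u y -> Cc x y.
      by case/orP => [/eqP <- //|h]; exact: Cc_trans hc h.
    move/Cxy; rewrite CcE => /andP [h1 h2].
    rewrite leqNgt hi /= /marked negbK implybF andbT.
    by apply: contra h2 => /andP [/eqP -> ->]; rewrite eqxx.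
Qed.

Lemma crossH T x w Z : (forall z, z \in Z -> z.1.2 < T) -> ((0,T.-1),w) \in Z ->
  0 < T -> validM Z -> validM (((0,T),x) :: Z) = Rr w x.
Proof.
move=> hZ hz0 hT hv; have hT1 : T.-1 < T by rewrite ltn_predL.
have hTe : (T.-1 == T) = false by exact: ltn_eqF.
rewrite validM_cons hv andbT; apply/idP/idP.
- case/andP => _ /allP h1; have := h1 _ hz0.
  by rewrite /condP /condV /= leq_pred hTe xpair_eqE hTe /= /marked implybF RrE.
- move=> hc; apply/andP; split; apply/allP => [[[i k] y]] hz /=;
    have hk : k < T := hZ _ hz; rewrite /condP /condV /=;
    rewrite ?(leqNgt T k) ?hk ?(gtn_eqF hk) ?(ltn_eqF hk) /= ?andbF //=.
  + case: (eqVneq i 0) => [ei|ni] /=; last by rewrite andbF.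
    subst i; have : k <= T.-1 by rewrite -ltnS prednK.
    move=> /(rowrel hv hz hz0) /orP [/eqP ->|h];
      [have R := hc | have R := Rr_trans h hc];
      rewrite RrE in R; case/andP: R => R1 R2.
    * rewrite implybF; apply/negP => /and3P [_ /eqP e hm].
      by move: R2 hm; rewrite e eqxx /marked /= => /negP h1 h2; exact: h1 h2.
    * rewrite implybF; apply/negP => /and3P [_ /eqP e hm].
      by move: R2 hm; rewrite e eqxx /marked /= => /negP h1 h2; exact: h1 h2.
  + case: (eqVneq i 0) => [ei|ni] /=; last by rewrite andbF.
    subst i; have : k <= T.-1 by rewrite -ltnS prednK.
    move=> /(rowrel hv hz hz0) /orP [/eqP ->|h];
      [have R := hc | have R := Rr_trans h hc];
      rewrite RrE in R; case/andP: R => R1 R2.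
    * rewrite R1 implybT /= implybF; apply/negP => /and3P [_ e hm].
      by move: R2 hm; rewrite e /marked /= => /negP h1 h2; exact: h1 h2.
    * rewrite R1 implybT /= implybF; apply/negP => /and3P [_ e hm].
      by move: R2 hm; rewrite e /marked /= => /negP h1 h2; exact: h1 h2.
Qed.

Fixpoint allS (k n : nat) : seq (seq nat) :=
  if n is m.+1 then [seq x :: s | x <- iota 0 k, s <- allS k m] else [:: [::]].

Lemma big_allS_S k n (F : seq nat -> rat) :
  (\sum_(s <- allS k n.+1) F s = \sum_(x <- iota 0 k) \sum_(s <- allS k n) F (x :: s))%R.
Proof. by rewrite /= big_allpairs_dep. Qed.

Lemma big_allS_cat k m1 m2 (F : seq nat -> rat) :
  (\sum_(s <- allS k (m1 + m2)) F s =
   \sum_(s1 <- allS k m1) \sum_(s2 <- allS k m2) F (s1 ++ s2))%R.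
Proof.
elim: m1 F => [|m1 IH] F; first by rewrite add0n /= big_cons big_nil addr0.
rewrite addSn !big_allS_S; apply: eq_bigr => x _; exact: IH.
Qed.

Lemma allS_mem k n s : (s \in allS k n) = (size s == n) && all (fun x => x < k) s.
Proof.
elim: n s => [|n IH] [|x s] //=.
- by apply/allpairsPdep => [[y [t [_ _]]]].
- apply/allpairsPdep/idP.
  + move=> [y [t [hy ht [-> ->]]]]; move: ht; rewrite IH eqSS => /andP [-> ->].
    by rewrite mem_iota in hy; rewrite andbT.
  + rewrite eqSS => /and3P [hn hx hs]; exists x, s; split=> //.
      by rewrite mem_iota.
    by rewrite IH hn hs.
Qed.

Lemma allS_uniq k n : uniq (allS k n).
Proof.
elim: n => [|n IH] //=; apply: allpairs_uniq => //; first exact: iota_uniq.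
by move=> [x s] [y t] _ _ [-> ->].
Qed.

Definition tolist n k (T : {ffun 'I_n -> 'I_k}) : seq nat := [seq val (T i) | i <- enum 'I_n].

Lemma nth_tolist n k (T : {ffun 'I_n -> 'I_k}) (i : 'I_n) : nth 0 (tolist T) i = T i.
Proof. by rewrite /tolist (nth_map i) ?size_enum_ord // nth_ord_enum. Qed.

Lemma size_tolist n k (T : {ffun 'I_n -> 'I_k}) : size (tolist T) = n.
Proof. by rewrite /tolist size_map size_enum_ord. Qed.

Lemma tolist_inj n k : injective (@tolist n k).
Proof.
move=> T1 T2 e; apply/ffunP => i; apply: val_inj.
by have := congr1 (fun s => nth 0 s i) e; rewrite /= !nth_tolist.
Qed.

Lemma sum_ffun_allS n k (G : seq nat -> rat) :
  (\sum_(T : {ffun 'I_n -> 'I_k.+1}) G (tolist T) = \sum_(s <- allS k.+1 n) G s)%R.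
Proof.
have hp : perm_eq (map (@tolist n k.+1) (enum {ffun 'I_n -> 'I_k.+1})) (allS k.+1 n).
  apply: uniq_perm; first by rewrite map_inj_uniq ?enum_uniq //; exact: tolist_inj.
    exact: allS_uniq.
  move=> s; rewrite allS_mem; apply/mapP/idP.
  - move=> [T _ ->]; rewrite size_tolist eqxx /=; apply/allP => x /mapP [i _ ->].
    exact: ltn_ord.
  - move=> /andP [/eqP hs ha]; exists [ffun i : 'I_n => inord (nth 0 s i)]; first by rewrite mem_enum.
    apply: (@eq_from_nth _ 0); first by rewrite size_tolist.
    move=> i; rewrite hs => hi; rewrite (nth_tolist _ (Ordinal hi)) ffunE inordK //.
    by rewrite ltnS -ltnS; apply: (allP ha); apply: mem_nth; rewrite hs.
by rewrite -(perm_big _ hp) big_map big_enum.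
Qed.

Lemma crossU' S x u Z : (forall z, z \in Z -> (0 < z.1.1) && (z.1.2 <= S)) ->
  ((1,S),u) \in Z -> validM (((0,S),x) :: Z) = validM Z && Cc x u.
Proof.
move=> h1 h2; case hv: (validM Z); first by rewrite (@crossU S x u Z h1 h2 hv).
by rewrite validM_cons hv !andbF.
Qed.

Lemma crossH' T x w Z : (forall z, z \in Z -> z.1.2 < T) -> ((0,T.-1),w) \in Z ->
  0 < T -> validM (((0,T),x) :: Z) = validM Z && Rr w x.
Proof.
move=> h1 h2 h3; case hv: (validM Z); first by rewrite (@crossH T x w Z h1 h2 h3 hv).
by rewrite validM_cons hv !andbF.
Qed.

Lemma validM_mid A z B : validM (A ++ z :: B) = validM (z :: (A ++ B)).
Proof.
apply: validM_eq => y; rewrite !(mem_cat, in_cons).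
by case: (y \in A); case: (y == z).
Qed.

Definition cnt (s : seq nat) : nat := count (fun x => x < 2) s.

Definition EF (phi : nat -> rat) (alpha : seq nat) (v : nat) : rat :=
  (\sum_(s <- allS 4 (sumn alpha))
     if validM (zip (cells alpha) s) && (nth 0 s (head 0 alpha).-1 == v)
     then phi (cnt s) else 0)%R.

Lemma pick_last (P : nat -> bool) (G : nat -> rat) v : v < 4 ->
  (\sum_(x <- iota 0 4) (if P x && (x == v) then G x else 0) = if P v then G v else 0)%R.
Proof.
move=> hv; rewrite (bigD1_seq v) ?iota_uniq ?mem_iota //= eqxx andbT.
rewrite big1 ?addr0 // => x hx; by rewrite (negbTE hx) andbF.
Qed.

Lemma pick_first (Q : nat -> bool) b (A : rat) w : w < 4 ->
  (\sum_(u <- iota 0 4) (if Q u then (if b && (w == u) then A else 0) else 0)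
    = if b && Q w then A else 0)%R.
Proof.
move=> hw; rewrite (bigD1_seq w) ?iota_uniq ?mem_iota //= eqxx andbT.
rewrite big1 ?addr0; first by case: (Q w); case: b.
by move=> x hx; rewrite eq_sym (negbTE hx) andbF; case: (Q x).
Qed.

Lemma if_sum (I : Type) (r : seq I) (b : bool) (F : I -> rat) :
  ((if b then \sum_(i <- r) F i else 0) = \sum_(i <- r) if b then F i else 0)%R.
Proof. by case: b; rewrite // big1. Qed.

Lemma big_allS_ins k j m (F : seq nat -> rat) :
  (\sum_(s <- allS k (j + (1 + m))) F s =
   \sum_(r <- allS k j) \sum_(x <- iota 0 k) \sum_(t <- allS k m) F (r ++ x :: t))%R.
Proof.
rewrite big_allS_cat; apply: eq_bigr => r _.
rewrite big_allS_cat big_allS_S; apply: eq_bigr => x _.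
by rewrite /= big_cons big_nil addr0.
Qed.

Lemma cellsH j b : cells (j.+1 :: b) = rowc (Sof b) j ++ (0, Sof b + j) :: shiftr (cells b).
Proof. by rewrite cells_cons /rowc -addn1 iotaD map_cat /= add0n -catA. Qed.

Lemma allS_size k n s : s \in allS k n -> size s = n.
Proof. by rewrite allS_mem => /andP [/eqP]. Qed.

Lemma allS_lt k n s i : s \in allS k n -> i < n -> nth 0 s i < k.
Proof.
rewrite allS_mem => /andP [/eqP hs ha] hi; apply: (allP ha); apply: mem_nth; by rewrite hs.
Qed.

Lemma zip_mem1 (A B : eqType) (s : seq A) (t : seq B) z :
  z \in zip s t -> size s <= size t -> z.1 \in s.
Proof. by move=> h hs; rewrite -(unzip1_zip hs); apply: map_f. Qed.

Lemma EF_H phi j b v : 0 < j -> v < 4 ->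
  EF phi (j.+1 :: b) v =
  (\sum_(u <- iota 0 4) (if Rr u v then EF (fun c => phi (c + (v < 2)%N)) (j :: b) u else 0))%R.
Proof.
move=> hj hv; rewrite /EF.
have -> : sumn (j.+1 :: b) = j + (1 + sumn b) by rewrite /= addSnnS add1n.
rewrite big_allS_ins.
transitivity (\sum_(r <- allS 4 j) \sum_(t <- allS 4 (sumn b))
   (if validM (zip (cells (j :: b)) (r ++ t)) && Rr (nth 0%N r j.-1) v
    then phi (cnt (r ++ t) + (v < 2)%N) else 0))%R.
- rewrite big_seq [RHS]big_seq; apply: eq_bigr => r hr.
  rewrite exchange_big /= big_seq [RHS]big_seq; apply: eq_bigr => t ht.
  have hs := allS_size hr; have hst := allS_size ht.
  have E : forall x, (if validM (zip (cells (j.+1 :: b)) (r ++ x :: t)) &&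
        (nth 0 (r ++ x :: t) (head 0 (j.+1 :: b)).-1 == v) then phi (cnt (r ++ x :: t)) else 0%R)
      = (if (validM (zip (cells (j :: b)) (r ++ t)) && Rr (nth 0 r j.-1) x) && (x == v)
         then phi (cnt (r ++ t) + (x < 2)) else 0%R).
    move=> x.
    have e1 : nth 0 (r ++ x :: t) j = x by rewrite nth_cat hs ltnn subnn.
    have e2 : cnt (r ++ x :: t) = cnt (r ++ t) + (x < 2).
      by rewrite /cnt !count_cat /= addnCA addnC.
    have e3 : validM (zip (cells (j.+1 :: b)) (r ++ x :: t)) =
              validM (zip (cells (j :: b)) (r ++ t)) && Rr (nth 0 r j.-1) x.
      rewrite cellsH zip_cat ?size_map ?size_iota ?hs // validM_mid.
      rewrite (@crossH' (Sof b + j) x (nth 0 r j.-1)).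
      + by rewrite cells_cons zip_cat ?size_map ?size_iota ?hs.
      + move=> z; rewrite mem_cat => /orP [] hz.
        * move/zip_mem1: hz; rewrite ?size_map ?size_iota ?hs => /(_ (leqnn _)).
          by move=> /mapP [j']; rewrite mem_iota => /andP [_ hj'] -> /=; rewrite ltn_add2l.
        * move/zip_mem1: hz; rewrite ?size_map ?size_cells ?hst => /(_ (leqnn _)).
          move=> /mapP [q hq ->] /=; have := cells_col hq => hq2.
          by apply: (leq_ltn_trans hq2); rewrite -{1}(addn0 (Sof b)) ltn_add2l.
      + rewrite mem_cat; apply/orP; left.
        have : nth ((0,0),0) (zip (rowc (Sof b) j) r) j.-1 \in zip (rowc (Sof b) j) r.
          by apply: mem_nth; rewrite size_zip size_map size_iota hs minnn ltn_predL.
        rewrite nth_zip ?size_map ?size_iota ?hs // (nth_map 0) ?size_iota ?ltn_predL //.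
        rewrite nth_iota ?ltn_predL // add0n.
        suff -> : (Sof b + j).-1 = Sof b + j.-1 by [].
        by rewrite -(prednK hj) addnS.
      + by rewrite addn_gt0 hj orbT.
    by rewrite e3 /= e1 e2.
  rewrite (eq_bigr _ (fun x _ => E x)) pick_last //.
- under [RHS]eq_bigr => u _ do
    rewrite /= big_allS_cat if_sum (eq_bigr _ (fun r _ => if_sum _ _ _)).
  rewrite [RHS]exchange_big big_seq [RHS]big_seq; apply: eq_bigr => r hr.
  rewrite [RHS]exchange_big; apply: eq_bigr => t _ /=.
  have hs := allS_size hr.
  have e : nth 0 (r ++ t) j.-1 = nth 0 r j.-1 by rewrite nth_cat hs ltn_predL hj.
  rewrite e pick_first //; apply: (allS_lt hr); by rewrite ltn_predL.
Qed.

Lemma EF_U phi b0 g v : 0 < b0 -> v < 4 ->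
  EF phi (1 :: b0 :: g) v =
  (\sum_(u <- iota 0 4) (if Cc v u then EF (fun c => phi (c + (v < 2)%N)) (b0 :: g) u else 0))%R.
Proof.
move=> hb hv; rewrite /EF.
have -> : sumn (1 :: b0 :: g) = (sumn (b0 :: g)).+1 by rewrite /= add1n.
rewrite big_allS_S.
transitivity (\sum_(t <- allS 4 (sumn (b0 :: g)))
   (if validM (zip (cells (b0 :: g)) t) && Cc v (nth 0%N t b0.-1)
    then phi (cnt t + (v < 2)%N) else 0))%R.
- rewrite exchange_big big_seq [RHS]big_seq; apply: eq_bigr => t ht.
  have hst := allS_size ht.
  have E : forall x, (if validM (zip (cells (1 :: b0 :: g)) (x :: t)) &&
        (nth 0 (x :: t) (head 0 (1 :: b0 :: g)).-1 == v) then phi (cnt (x :: t)) else 0%R)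
      = (if (validM (zip (cells (b0 :: g)) t) && Cc x (nth 0 t b0.-1)) && (x == v)
         then phi (cnt t + (x < 2)) else 0%R).
    move=> x.
    have e3 : validM (zip (cells (1 :: b0 :: g)) (x :: t)) =
              validM (zip (cells (b0 :: g)) t) && Cc x (nth 0 t b0.-1).
      rewrite cells_cons /rowc /= addn0.
      rewrite (@crossU' (Sof (b0 :: g)) x (nth 0 t b0.-1)).
      + by rewrite validM_sh.
      + move=> z /zip_mem1; rewrite size_map size_cells hst => /(_ (leqnn _)).
        by move=> /mapP [q hq ->] /=; exact: cells_col hq.
      + have hlt : b0.-1 < size (shiftr (cells (b0 :: g))).
          by rewrite size_map size_cells /= -(prednK hb) addSn ltnS leq_addr.
        have : nth ((0,0),0) (zip (shiftr (cells (b0 :: g))) t) b0.-1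
               \in zip (shiftr (cells (b0 :: g))) t.
          by apply: mem_nth; rewrite size_zip hst -size_cells -(size_map (fun p : nat * nat => (p.1.+1, p.2))) minnn.
        rewrite nth_zip ?size_map ?size_cells ?hst // (nth_map (0,0)) //.
        by rewrite cells_top.
      by rewrite -(size_map (fun p : nat * nat => (p.1.+1, p.2))).
    by rewrite e3 /= /cnt /= addnC.
  by rewrite (eq_bigr _ (fun x _ => E x)) pick_last.
- under [RHS]eq_bigr => u _ do rewrite if_sum.
  rewrite [RHS]exchange_big big_seq [RHS]big_seq; apply: eq_bigr => t ht /=.
  rewrite pick_first //; apply: (allS_lt ht).
  by rewrite /= -(prednK hb) addSn ltnS leq_addr.
Qed.

Lemma EF_1 phi v : v < 4 -> EF phi [:: 1] v = phi (v < 2)%N.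
Proof.
move=> hv; rewrite /EF (_ : sumn [:: 1] = 0.+1) // big_allS_S.
under eq_bigr => x _ do rewrite big_cons big_nil addr0 cells_cons /= /validM /= condP_refl /=.
by rewrite (pick_last (fun _ => true) (fun x => phi ((x < 2) + 0)%N)) // addn0.
Qed.

Local Open Scope ring_scope.

Definition sgn (c : nat) : rat := (-1) ^+ c.
Definition phiF (c : nat) : rat := c%:R * (-1) ^+ c.

Lemma EF_ext p1 p2 a v : p1 =1 p2 -> EF p1 a v = EF p2 a v.
Proof. by move=> e; rewrite /EF; apply: eq_bigr => s _; rewrite e. Qed.

Lemma EF_lin k1 k2 p1 p2 a v :
  EF (fun c => k1 * p1 c + k2 * p2 c) a v = k1 * EF p1 a v + k2 * EF p2 a v.
Proof.
rewrite /EF !mulr_sumr -big_split /=; apply: eq_bigr => s _.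
by case: ifP => _; rewrite ?mulr0 ?addr0.
Qed.

Lemma sgn_shift a u (d : nat) : EF (fun c => sgn (c + d)) a u = sgn d * EF sgn a u.
Proof.
rewrite (@EF_ext _ (fun c => sgn d * sgn c + 0 * sgn c)) ?EF_lin ?mul0r ?addr0 //.
by move=> c /=; rewrite /sgn exprD mul0r addr0 mulrC.
Qed.

Lemma phiF_shift a u (d : nat) :
  EF (fun c => phiF (c + d)) a u = sgn d * (EF phiF a u + d%:R * EF sgn a u).
Proof.
rewrite (@EF_ext _ (fun c => sgn d * phiF c + (sgn d * d%:R) * sgn c)) ?EF_lin.
  by rewrite mulrDr mulrA.
by move=> c; rewrite /phiF /sgn natrD exprD; ring.
Qed.

Definition Xq a := EF sgn a 0 + EF sgn a 1.
Definition Yq a := EF sgn a 2 + EF sgn a 3.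
Definition Sq a := EF phiF a 0 + EF phiF a 1 + EF phiF a 2 + EF phiF a 3.

Lemma stepH j b : (0 < j)%N ->
  [/\ Xq (j.+1 :: b) = - Xq (j :: b), Yq (j.+1 :: b) = 2 * Xq (j :: b) + Yq (j :: b)
    & Sq (j.+1 :: b) = Sq (j :: b) - Xq (j :: b)].
Proof.
move=> hj; rewrite /Xq /Yq /Sq !EF_H //.
rewrite !big_cons !big_nil /Rr /=.
rewrite !sgn_shift !phiF_shift /sgn /=.
split; ring.
Qed.

Lemma stepU b0 g : (0 < b0)%N ->
  [/\ Xq (1 :: b0 :: g) = - Xq (b0 :: g) - 2 * Yq (b0 :: g), Yq (1 :: b0 :: g) = Yq (b0 :: g)
    & Sq (1 :: b0 :: g) = - Sq (b0 :: g) - Xq (b0 :: g) - 2 * Yq (b0 :: g)].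
Proof.
move=> hb; rewrite /Xq /Yq /Sq !EF_U //.
rewrite !big_cons !big_nil /Cc /=.
rewrite !sgn_shift !phiF_shift /sgn /=.
split; ring.
Qed.

Lemma step1 : [/\ Xq [:: 1] = -2, Yq [:: 1] = 2 & Sq [:: 1] = -2].
Proof. by rewrite /Xq /Yq /Sq !EF_1 // /sgn /phiF /=; split; ring. Qed.

Lemma size_le_sumn a : composition a -> (size a <= sumn a)%N.
Proof.
elim: a => [|x a IH] //= /andP [hx ha]; rewrite -add1n leq_add //; exact: IH.
Qed.

Definition Pinv a := [/\ Xq a = -2 * (-1) ^+ (sumn a - size a)%N, Yq a = - Xq a
   & Sq a = - (-1) ^+ (size a).-1 - (-1) ^+ (sumn a - size a)%N].

Lemma PinvH j b : (0 < j)%N -> composition b -> Pinv (j :: b) -> Pinv (j.+1 :: b).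
Proof.
move=> hj hb [ex ey es]; have [x1 y1 s1] := stepH b hj.
have hs := size_le_sumn hb; rewrite /Pinv.
have -> : (sumn (j.+1 :: b) - size (j.+1 :: b))%N = (sumn (j :: b) - size (j :: b)).+1.
  by rewrite /=; lia.
rewrite x1 y1 s1 ey ex es /= exprS; split; ring.
Qed.

Lemma PinvU b0 g : (0 < b0)%N -> composition (b0 :: g) -> Pinv (b0 :: g) -> Pinv (1 :: b0 :: g).
Proof.
move=> hb hc [ex ey es]; have [x1 y1 s1] := stepU g hb.
have hs := size_le_sumn hc; rewrite /Pinv.
have -> : (sumn (1 :: b0 :: g) - size (1 :: b0 :: g))%N = (sumn (b0 :: g) - size (b0 :: g))%N.
  by rewrite /=; lia.
have -> : (size (1 :: b0 :: g)).-1 = (size (b0 :: g)).-1.+1 by [].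
rewrite x1 y1 s1 ey ex es exprS; split; ring.
Qed.

Lemma Pinv_all a0 b : (0 < a0)%N -> composition b -> Pinv (a0 :: b).
Proof.
elim: b a0 => [|b0 g IH] a0 ha0 hb.
- elim: a0 ha0 => [|[|j] IHj] // _.
  + have [x1 y1 s1] := step1; rewrite /Pinv x1 y1 s1 /=; split; ring.
  + by apply: PinvH => //; apply: IHj.
- move: (hb) => /= /andP [hb0 hg]; have Pb := IH b0 hb0 hg.
  elim: a0 ha0 => [|[|j] IHj] // _.
  + exact: PinvU.
  + by apply: PinvH => //; apply: IHj.
Qed.

Lemma sign_sq (n : nat) : (-1) ^+ n * (-1) ^+ n = 1 :> rat.
Proof. by rewrite -expr2 sqrr_sign. Qed.

Lemma sign_p1_ge0 (n : nat) : 0 <= (-1) ^+ n + 1 :> rat.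
Proof. by rewrite -signr_odd; case: (odd n); rewrite ?expr0 ?expr1 //; lra. Qed.

Lemma sum_ord2 (F : 'I_2 -> rat) : \sum_(k < 2) F k = F ord0 + F ord_max.
Proof. by rewrite big_ord_recl big_ord1; congr (_ + F _); apply: val_inj. Qed.

Section PSide.
Variable lam : seq nat.
Let l := size lam.
Let s (j : 'I_l) : rat := (-1) ^+ (nth 0%N lam j).
Let Af (f : {ffun 'I_l -> 'I_2}) : nat := (\sum_(i | f i == ord0) nth 0 lam i)%N.

Lemma pside_term (i : 'I_l) :
  \sum_(f : {ffun 'I_l -> 'I_2}) (if f i == ord0 then (nth 0 lam i)%:R else 0) *
       \prod_j (if f j == ord0 then s j else 1)
  = (nth 0 lam i)%:R * s i * \prod_(j | j != i) (s j + 1).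
Proof.
pose h (j : 'I_l) (k : 'I_2) : rat :=
  if j == i then (if k == ord0 then (nth 0 lam i)%:R * s i else 0)
  else (if k == ord0 then s j else 1).
transitivity (\sum_(f : {ffun 'I_l -> 'I_2}) \prod_j h j (f j)).
  apply: eq_bigr => f _; rewrite (bigD1 i) //= [RHS](bigD1 i) //= /h eqxx.
  rewrite mulrA; congr (_ * _); last first.
    by apply: eq_bigr => j /negbTE ->.
  by case: (f i == ord0); rewrite ?mul0r ?mulr0.
rewrite -bigA_distr_bigA (bigD1 i) //= sum_ord2 /h eqxx /= addr0.
congr (_ * _); apply: eq_bigr => j /negbTE ->; rewrite sum_ord2 /=.
by rewrite addrC.
Qed.

Lemma pside_nonpos : odd (\sum_(i < l) nth 0 lam i)%N ->
  \sum_(f : {ffun 'I_l -> 'I_2}) phiF (Af f) <= 0.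
Proof.
move=> hodd.
have E : forall f : {ffun 'I_l -> 'I_2}, phiF (Af f) = \sum_i (if f i == ord0 then (nth 0 lam i)%:R else 0) *
       \prod_j (if f j == ord0 then s j else 1).
  move=> f; rewrite /phiF /Af natr_sum big_mkcond /= -mulr_suml; congr (_ * _).
  by rewrite -prodrXr big_mkcond /=.
rewrite (eq_bigr _ (fun f _ => E f)) exchange_big /=.
apply: sumr_le0 => i _; rewrite pside_term.
have hP : \prod_(j | j != i) (s j + 1) = \prod_(j | j != i) s j * \prod_(j | j != i) (s j + 1).
  rewrite -big_split /=; apply: eq_bigr => j _.
  by rewrite mulrDr sign_sq mulr1 addrC.
have hS : s i * \prod_(j | j != i) s j = -1.
  transitivity (\prod_j s j); first by rewrite [RHS](bigD1 i).
  by rewrite /s prodrXr -signr_odd hodd expr1.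
rewrite hP mulrA -(mulrA _ (s i)) hS.
rewrite mulrN1 mulNr oppr_le0; apply: mulr_ge0; first exact: ler0n.
by apply: prodr_ge0 => j _; exact: sign_p1_ge0.
Qed.

End PSide.

Lemma card_sum (T : finType) (Q : pred T) :
  (#|[set x | Q x]|)%:R = \sum_x (if Q x then 1 else 0) :> rat.
Proof.
rewrite -sum1dep_card natr_sum big_mkcond /=; apply: eq_bigr => x _.
by case: (Q x).
Qed.

Lemma sum_pick_ord n (x : nat) (F : nat -> rat) : (x <= n)%N ->
  \sum_(a < n.+1) F a * (if x == a then 1 else 0) = F x.
Proof.
move=> hx; rewrite (bigD1 (inord x)) //= inordK ?ltnS // eqxx mulr1 big1 ?addr0 //.
move=> a ha; rewrite ifN ?mulr0 //; apply: contra ha => /eqP e.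
by apply/eqP/val_inj; rewrite /= inordK ?ltnS // e.
Qed.

Lemma sumn_ord (lam : seq nat) : (\sum_(i < size lam) nth 0 lam i)%N = sumn lam.
Proof. by rewrite sumnE (big_nth 0) big_mkord. Qed.

Lemma ord2_neq0 (k : 'I_2) : (k != ord0) = (k == ord_max).
Proof. by case: k => [[|[|]]]. Qed.

Definition cfun (n a : nat) : 'I_2 -> nat := fun k => if (k : nat) == 0%N then a else (n - a)%N.

Lemma forall2 (P : 'I_2 -> bool) : [forall j, P j] = P ord0 && P ord_max.
Proof.
apply/forallP/andP => [h|[h0 h1] j]; first by split.
by have := ord2_neq0 j; case: (eqVneq j ord0) => [->|_] // /esym /eqP ->.
Qed.

Lemma pside_link lam n : sumn lam = n -> odd n ->
  \sum_(a < n.+1) phiF a * (p_coeff lam (cfun n a))%:R <= 0.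
Proof.
move=> hs hodd.
under eq_bigr => a _ do rewrite card_sum mulr_sumr.
rewrite exchange_big /=.
set Af := fun f : {ffun 'I_(size lam) -> 'I_2} => (\sum_(i | f i == ord0) nth 0 lam i)%N.
have hsplit : forall f : {ffun 'I_(size lam) -> 'I_2},
   ((\sum_(i | f i == ord_max) nth 0 lam i) = n - Af f)%N /\ (Af f <= n)%N.
  move=> f; have := sumn_ord lam; rewrite hs (bigID (fun i => f i == ord0)) /= => e.
  rewrite -e; split; last exact: leq_addr.
  by rewrite addKn; apply: eq_bigl => i; rewrite ord2_neq0.
have -> : \sum_(f : {ffun 'I_(size lam) -> 'I_2}) \sum_(a < n.+1)
    phiF a * (if [forall j, (\sum_(i | f i == j) nth 0 lam i)%N == cfun n a j] then 1 else 0)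
  = \sum_(f : {ffun 'I_(size lam) -> 'I_2}) phiF (Af f).
  apply: eq_bigr => f _; have [h1 h2] := hsplit f.
  rewrite -(sum_pick_ord _ h2); apply: eq_bigr => a _.
  rewrite forall2 /cfun /= h1 -/(Af f).
  by case: (eqVneq (Af f) a) => [e|ne] //=; rewrite e eqxx.
apply: pside_nonpos; by rewrite sumn_ord hs.
Qed.

Lemma valid_bridge (X : seq (nat * nat)) k (T : {ffun 'I_(size X) -> 'I_k}) : uniq X ->
  [forall i : 'I_(size X), forall j : 'I_(size X),
     condV (nth (0%N,0%N) X i) (nth (0%N,0%N) X j) (T i) (T j) (i != j)]
  = validM (zip X (tolist T)).
Proof.
move=> hu; have hsz : size (tolist T) = size X := size_tolist T.
have hz : size (zip X (tolist T)) = size X by rewrite size_zip hsz minnn.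
apply/forallP/allP.
- move=> H z1 hz1; apply/allP => z2 hz2.
  have [i hi e1] := nthP ((0%N,0%N),0%N) hz1; have [j hj e2] := nthP ((0%N,0%N),0%N) hz2.
  rewrite hz in hi hj.
  have := forallP (H (Ordinal hi)) (Ordinal hj).
  rewrite -e1 -e2 /condP !nth_zip //=.
  have -> := nth_tolist T (Ordinal hi); have -> := nth_tolist T (Ordinal hj).
  by rewrite nth_uniq.
- move=> H i; apply/forallP => j.
  have hz1 : nth ((0%N,0%N),0%N) (zip X (tolist T)) i \in zip X (tolist T) by rewrite mem_nth ?hz.
  have hz2 : nth ((0%N,0%N),0%N) (zip X (tolist T)) j \in zip X (tolist T) by rewrite mem_nth ?hz.
  have := allP (H _ hz1) _ hz2; rewrite /condP !nth_zip //= !nth_tolist.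
  by rewrite nth_uniq.
Qed.

Lemma valid_filling_eq alpha (T : filling alpha 2) :
  valid_filling T = validM (zip (cells alpha) (tolist T)).
Proof. by rewrite -valid_bridge ?uniq_cells. Qed.

Lemma card_count n (P : pred 'I_n) : #|[set i | P i]| = count P (enum 'I_n).
Proof.
rewrite (@eq_card _ _ [pred i | P i]); last by move=> i; rewrite inE.
by rewrite cardE /enum_mem size_filter filter_predT.
Qed.

Lemma cnt_tolist n k (T : {ffun 'I_n -> 'I_k}) : cnt (tolist T) = count (fun i => T i < 2)%N (enum 'I_n).
Proof. by rewrite /cnt /tolist count_map. Qed.

Lemma content0 alpha (T : filling alpha 2) : content T ord0 = cnt (tolist T).
Proof.
rewrite /content card_count cnt_tolist; apply: eq_count => i /=.
move: (T i) => t; case: t => [[|[|x]] ?] //=.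
Qed.

Lemma content1 alpha (T : filling alpha 2) :
  content T ord_max = (sumn alpha - cnt (tolist T))%N.
Proof.
rewrite /content card_count cnt_tolist.
have h := count_predC (fun i => T i < 2)%N (enum 'I_(size (cells alpha))).
rewrite size_enum_ord in h.
have e : count (fun i => (T i)./2 == (@ord_max 1 : nat)) (enum 'I_(size (cells alpha))) =
   count (predC (fun i => T i < 2)%N) (enum 'I_(size (cells alpha))).
  apply: eq_count => i /=; move: (T i) => t; case: t => [[|[|[|[|x]]]] ?] //=.
have hsz := size_cells alpha; rewrite e; lia.
Qed.

Lemma pick_mid b (A : rat) w : (w < 4)%N ->
  \sum_(u <- iota 0 4) (if b && (w == u) then A else 0) = if b then A else 0.
Proof.
move=> hw; rewrite (bigD1_seq w) ?iota_uniq ?mem_iota //= eqxx andbT.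
rewrite big1 ?addr0 // => x hx; by rewrite eq_sym (negbTE hx) andbF.
Qed.

Lemma rside alpha : composition alpha -> alpha != [::] ->
  \sum_(a < (sumn alpha).+1) phiF a * (rD_coeff alpha (cfun (sumn alpha) a))%:R = Sq alpha.
Proof.
move=> hc hne.
under eq_bigr => a _ do rewrite /rD_coeff card_sum mulr_sumr.
rewrite exchange_big /=.
transitivity (\sum_(T : filling alpha 2)
   (if validM (zip (cells alpha) (tolist T)) then phiF (cnt (tolist T)) else 0)).
  apply: eq_bigr => T _; rewrite -valid_filling_eq.
  case: (valid_filling T) => /=; last by rewrite big1 // => a _; rewrite mulr0.
  have hx : (cnt (tolist T) <= sumn alpha)%N.
    have := count_size (fun x => x < 2)%N (tolist T); rewrite size_tolist.
    have := size_cells alpha; rewrite /cnt; lia.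
  rewrite -(sum_pick_ord _ hx); apply: eq_bigr => a _.
  rewrite forall2 content0 content1 /cfun /=.
  by case: (eqVneq (cnt (tolist T)) a) => [e|ne] //=; rewrite e eqxx.
rewrite (@sum_ffun_allS (size (cells alpha)) 3
   (fun s => if validM (zip (cells alpha) s) then phiF (cnt s) else 0)) size_cells.
transitivity (\sum_(v <- iota 0 4) EF phiF alpha v); last first.
  by rewrite /Sq !big_cons big_nil addr0 !addrA.
rewrite /EF [RHS]exchange_big /= big_seq [RHS]big_seq; apply: eq_bigr => s hs.
rewrite pick_mid //; apply: (allS_lt hs).
move: hc hne; case: (alpha) => [|a0 b] //= /andP [ha _] _.
by apply: leq_trans (leq_addr _ _); rewrite ltn_predL.
Qed.

Lemma sumn_filter0 (s : seq nat) : sumn [seq x <- s | x != 0%N] = sumn s.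
Proof. by elim: s => [|x s IH] //=; case: x => [|x] //=; rewrite IH. Qed.

Lemma sumn_part n (t : n.-tuple 'I_n.+1) : is_part t -> sumn (part_of t) = n.
Proof. by move=> /andP [_ /eqP h]; rewrite /part_of sumn_filter0. Qed.

Local Close Scope ring_scope.

Theorem mainTheorem16 (alpha : seq nat) :
  composition alpha ->
  odd (sumn alpha) ->
  ~ in_B alpha ->
  ~~ odd (size alpha) ->
  ~ p_positive (sumn alpha) (rD_coeff alpha).
Proof.
move=> hc hodd _ hev [coef [hpos hF]].
have hne : alpha != [::] by case: (alpha) hodd.
have R := rside hc hne.
have S2 : Sq alpha = 2%R.
  move: hc hodd hev R; case: (alpha) => [|a0 b] //= /andP [ha hb] hodd hev _.
  have [_ _ ->] := Pinv_all ha hb.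
  have hs := size_le_sumn hb.
  have e1 : odd (size b) by move: hev; rewrite /= negbK.
  have e2 : odd (a0 + sumn b - (size b).+1).
    rewrite oddB; last by rewrite -add1n leq_add.
    by rewrite hodd /= e1.
  have s1 : ((-1) ^+ (size b) = -1 :> rat)%R by rewrite -signr_odd e1 expr1.
  have s2 : ((-1) ^+ (a0 + sumn b - (size b).+1)%N = -1 :> rat)%R by rewrite -signr_odd e2 expr1.
  rewrite /= s1 s2; lra.
have : (\sum_(a < (sumn alpha).+1) phiF a * (rD_coeff alpha (cfun (sumn alpha) a))%:R <= 0)%R.
  under eq_bigr => a _ do rewrite hF mulr_sumr.
  rewrite exchange_big /=; apply: sumr_le0 => t ht.
  under eq_bigr => a _ do rewrite mulrA (mulrC (phiF a)) -mulrA.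
  rewrite -mulr_sumr; apply: mulr_ge0_le0; first exact: hpos.
  apply: pside_link => //; exact: sumn_part.
by rewrite R S2.
Qed.
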